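(* Let $O=(|H\rangle\langle H|)^{\otimes n}$ with $|H\rangle=\frac1{\sqrt2}(|0\rangle+e^{i\pi/4}|1\rangle)$, and consider shadow estimation with uniform sampling from the local Clifford group $\mathrm{Cl}_1^{\times n}$. There exist an $n$-qubit state $\rho$ and quantum channels $\Lambda(g)$, $g\in\mathrm{Cl}_1^{\times n}$, such that for the implementation maps $\phi_\epsilon(g)=(1-\epsilon)\omega(g)+\epsilon\,\omega(g)\Lambda(g)$, $\epsilon\in[0,1]$, the bias satisfies $\mathrm{bias}=\kappa\,\epsilon$, where $\kappa$ does not depend on $\epsilon$ and $\kappa\in\Omega(d^{1/4})$ as $n\to\infty$.
   Context: $d=2^n$; $(A|B)=\mathrm{Tr}(A^\dagger B)$; $\omega(g)(A)=gAg^\dagger$ with adjoint $\omega(g)^\dagger(A)=g^\dagger Ag$. $E_x=|x\rangle\langle x|$, $M=\sum_{x\in\mathbb{F}_2^n}|E_x)(E_x|$ where $|A)(B|$ is $C\mapsto (B|C)A$. The local Clifford group is $\mathrm{Cl}_1^{\times n}=\{g_1\otimes\cdots\otimes g_n:g_i\in\mathrm{Cl}_1\}$ with $\mathrm{Cl}_1$ the single-qubit Clifford group. The ideal frame operator is $S=\mathbb{E}_g[\omega(g)^\dagger M\omega(g)]$ and the noisy one $\tilde S_\epsilon=\mathbb{E}_g[\omega(g)^\dagger M\phi_\epsilon(g)]$, $g$ uniform on $\mathrm{Cl}_1^{\times n}$. The bias is $\mathrm{bias}=|\mathrm{Tr}(O\rho)-(O|S^{-1}\tilde S_\epsilon|\rho)|$,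 i.e. the deviation of the expectation of the shadow estimator $\hat o(g,x)=(O|S^{-1}\omega(g)^\dagger|E_x)$ from the true value when gate $g$ is implemented as $\phi_\epsilon(g)$. *)

(* Defs.v *)
From HB Require Import structures.
From mathcomp Require Import all_boot all_order all_algebra all_field.
Set Implicit Arguments. Unset Strict Implicit. Unset Printing Implicit Defensive.
Import Order.TTheory GRing.Theory Num.Theory.
Local Open Scope ring_scope.

Definition hadj (m k : nat) (A : 'M[algC]_(m, k)) : 'M[algC]_(k, m) :=
  (map_mx (fun z : algC => z^*) A)^T.

Definition hs (m : nat) (A B : 'M[algC]_m) : algC := \tr (hadj A *m B).

Definition psd (m : nat) (A : 'M[algC]_m) : Prop :=
  hadj A = A /\ forall v : 'cV[algC]_m, 0 <= (hadj v *m A *m v) 0 0.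

Definition is_state (m : nat) (rho : 'M[algC]_m) : Prop :=
  psd rho /\ \tr rho = 1.

Definition is_channel (m : nat) (L : 'M[algC]_m -> 'M[algC]_m) : Prop :=
  exists (r : nat) (K : 'I_r -> 'M[algC]_m),
    \sum_(i < r) hadj (K i) *m K i = 1%:M /\
    forall A, L A = \sum_(i < r) K i *m A *m hadj (K i).

(* superoperators are maps 'M_m -> 'M_m; inverse through the matrix of the
   linear map (lin_mx: mxvec A *m lin_mx F = mxvec (F A)) *)
Definition sinv (m : nat) (F : 'M[algC]_m -> 'M[algC]_m) :
    'M[algC]_m -> 'M[algC]_m :=
  fun A => vec_mx (mxvec A *m invmx (lin_mx F)).

Definition unif_mean (T : finType) (f : T -> algC) : algC :=
  #|T|%:R^-1 * \sum_(t : T) f t.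
Definition unif_mean_op (T : finType) (m : nat)
    (f : T -> 'M[algC]_m -> 'M[algC]_m) : 'M[algC]_m -> 'M[algC]_m :=
  fun A => #|T|%:R^-1 *: \sum_(t : T) f t A.

(* the computational basis index x : 'I_(2^n) is identified with the bit string
   in F_2^n whose i-th bit is bit x i *)
Definition bit (n : nat) (x : 'I_(2 ^ n)) (i : 'I_n) : 'I_2 :=
  inord (odd (x %/ 2 ^ i)).

(* n-fold tensor product A_0 (x) ... (x) A_{n-1} of one-qubit operators *)
Definition ntens (n : nat) (A : 'I_n -> 'M[algC]_2) : 'M[algC]_(2 ^ n) :=
  \matrix_(x, y) \prod_(i < n) A i (bit x i) (bit y i).

Definition Ebas (n : nat) (x : 'I_(2 ^ n)) : 'M[algC]_(2 ^ n) := delta_mx x x.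

Definition Mmeas (n : nat) (A : 'M[algC]_(2 ^ n)) : 'M[algC]_(2 ^ n) :=
  \sum_(x < 2 ^ n) hs (Ebas x) A *: Ebas x.

Definition isq2 : algC := (sqrtC 2)^-1.
Definition PauliI : 'M[algC]_2 := 1%:M.
Definition PauliX : 'M[algC]_2 := \matrix_(i, j) (if i != j then 1 else 0).
Definition PauliZ : 'M[algC]_2 :=
  \matrix_(i, j) (if i == j then (if i == 0 then 1 else -1) else 0).
Definition PauliY : 'M[algC]_2 := 'i *: (PauliX *m PauliZ).
Definition Hgate : 'M[algC]_2 :=
  \matrix_(i, j) (if (i == 1) && (j == 1) then - isq2 else isq2).
Definition Sgate : 'M[algC]_2 :=
  \matrix_(i, j) (if i == j then (if i == 0 then 1 else 'i) else 0).

(* the 6 representatives of the action on the Pauli axes *)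
Definition cl_perm (a : 'I_6) : 'M[algC]_2 :=
  match val a with
  | 0 => 1%:M
  | 1 => Hgate
  | 2 => Sgate
  | 3 => Hgate *m Sgate
  | 4 => Sgate *m Hgate
  | _ => Hgate *m Sgate *m Hgate
  end.
Definition pauli (b : 'I_4) : 'M[algC]_2 :=
  match val b with
  | 0 => PauliI | 1 => PauliX | 2 => PauliY | _ => PauliZ
  end.

(* Cl_1 (modulo phases, which do not affect omega(g)) has the 24 elements
   P_b C_a, a : 'I_6, b : 'I_4 *)
Definition Cl1 : finType := ('I_6 * 'I_4)%type.
Definition cl1_mx (g : Cl1) : 'M[algC]_2 := pauli g.2 *m cl_perm g.1.

Definition LCl (n : nat) : finType := {ffun 'I_n -> Cl1}.
Definition lcl_mx (n : nat) (g : LCl n) : 'M[algC]_(2 ^ n) :=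
  ntens (fun i => cl1_mx (g i)).

Definition omega (n : nat) (g : LCl n) (A : 'M[algC]_(2 ^ n)) :=
  lcl_mx g *m A *m hadj (lcl_mx g).
Definition omega_adj (n : nat) (g : LCl n) (A : 'M[algC]_(2 ^ n)) :=
  hadj (lcl_mx g) *m A *m lcl_mx g.

Definition frameS (n : nat) : 'M[algC]_(2 ^ n) -> 'M[algC]_(2 ^ n) :=
  unif_mean_op (fun g : LCl n => fun A => omega_adj g (Mmeas (omega g A))).

Definition phi_eps (n : nat) (Lam : LCl n -> 'M[algC]_(2 ^ n) -> 'M[algC]_(2 ^ n))
    (eps : algC) (g : LCl n) (A : 'M[algC]_(2 ^ n)) : 'M[algC]_(2 ^ n) :=
  (1 - eps) *: omega g A + eps *: omega g (Lam g A).

Definition frameS_noisy (n : nat)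
    (Lam : LCl n -> 'M[algC]_(2 ^ n) -> 'M[algC]_(2 ^ n)) (eps : algC) :
    'M[algC]_(2 ^ n) -> 'M[algC]_(2 ^ n) :=
  unif_mean_op (fun g : LCl n => fun A => omega_adj g (Mmeas (phi_eps Lam eps g A))).

Definition bias (n : nat) (O rho : 'M[algC]_(2 ^ n))
    (Lam : LCl n -> 'M[algC]_(2 ^ n) -> 'M[algC]_(2 ^ n)) (eps : algC) : algC :=
  `| \tr (O *m rho) - hs O (sinv (@frameS n) (frameS_noisy Lam eps rho)) |.

(* |H> = (|0> + e^{i pi/4} |1>)/sqrt 2, with e^{i pi/4} = (1 + i)/sqrt 2 *)
Definition ketH : 'cV[algC]_2 :=
  \col_i (if i == 0 then isq2 else isq2 * ((1 + 'i) * isq2)).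
Definition projH : 'M[algC]_2 := ketH *m hadj ketH.
Definition Obs (n : nat) : 'M[algC]_(2 ^ n) := ntens (fun _ => projH).

(* Main.v *)
Require Import Defs.
From HB Require Import structures.
From mathcomp Require Import all_boot all_order all_algebra all_field.
From mathcomp Require Import ring zify.
From Stdlib Require Import FunctionalExtensionality.
Set Implicit Arguments. Unset Strict Implicit. Unset Printing Implicit Defensive.
Import Order.TTheory GRing.Theory Num.Theory.
Local Open Scope ring_scope.

(* Proof outline: the ideal frame operator of the local
   Clifford group is a product superoperator whose inverse is explicit
   (T1 X = 3X - tr X I per qubit); single-qubit identities are checked by
   reflection into Q(i, sqrt 2) with vm_compute. *)


Record Q4 := mkQ4 { q1 : rat; qi : rat; qs : rat; qis : rat }.
Definition s2 : algC := sqrtC 2.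
Definition emb (x : Q4) : algC :=
  ratr (q1 x) + ratr (qi x) * 'i + ratr (qs x) * s2 + ratr (qis x) * ('i * s2).
Definition q0 := mkQ4 0 0 0 0.
Definition qadd x y := mkQ4 (q1 x + q1 y) (qi x + qi y) (qs x + qs y) (qis x + qis y).
Definition qmul x y := mkQ4
  (q1 x * q1 y - qi x * qi y + 2%:R * (qs x * qs y) - 2%:R * (qis x * qis y))
  (q1 x * qi y + qi x * q1 y + 2%:R * (qs x * qis y) + 2%:R * (qis x * qs y))
  (q1 x * qs y + qs x * q1 y - qi x * qis y - qis x * qi y)
  (q1 x * qis y + qis x * q1 y + qi x * qs y + qs x * qi y).
Definition qconj x := mkQ4 (q1 x) (- qi x) (qs x) (- qis x).
Definition qeq x y := [&& q1 x == q1 y, qi x == qi y, qs x == qs y & qis x == qis y].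

Lemma qeqP x y : qeq x y -> x = y.
Proof. by case: x y => [a b c d] [a1 b1 c1 d1] /and4P[/= /eqP-> /eqP-> /eqP-> /eqP->]. Qed.

Lemma s2s2 : s2 * s2 = 2.
Proof. by rewrite -expr2 sqrtCK. Qed.
Lemma ii : 'i * 'i = -1 :> algC.
Proof. by rewrite -expr2 sqrCi. Qed.

Lemma mul4 (R : comRingType) (i s a b c d a' b' c' d' : R) : i*i = -1 -> s*s = 2%:R ->
  (a + b*i + c*s + d*(i*s)) * (a' + b'*i + c'*s + d'*(i*s)) =
  (a*a' - b*b' + 2%:R*(c*c') - 2%:R*(d*d')) + (a*b' + b*a' + 2%:R*(c*d') + 2%:R*(d*c'))*i
  + (a*c' + c*a' - b*d' - d*b')*s + (a*d' + d*a' + b*c' + c*b')*(i*s).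
Proof.
move=> hi hs.
have E : (a + b*i + c*s + d*(i*s)) * (a' + b'*i + c'*s + d'*(i*s)) =
  a*a' + b*b'*(i*i) + c*c'*(s*s) + d*d'*((i*i)*(s*s))
  + (a*b' + b*a' + c*d'*(s*s) + d*c'*(s*s))*i
  + (a*c' + c*a' + b*d'*(i*i) + d*b'*(i*i))*s + (a*d' + d*a' + b*c' + c*b')*(i*s) by ring.
rewrite E hi hs; ring.
Qed.

Lemma emb_add x y : emb (qadd x y) = emb x + emb y.
Proof. rewrite /emb /qadd /= !rmorphD /=; ring. Qed.

Lemma emb_mul x y : emb (qmul x y) = emb x * emb y.
Proof.
rewrite /emb /qmul /= (mul4 _ _ _ _ _ _ _ _ ii s2s2).
rewrite !(rmorphD, rmorphB, rmorphM, rmorphN, rmorph_nat) /=; ring.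
Qed.

Lemma conj_ratr (q : rat) : (ratr q : algC)^* = ratr q.
Proof. by rewrite fmorph_rat. Qed.

Lemma conjM_r (q : rat) (z : algC) : (ratr q * z)^* = ratr q * z^*.
Proof. by rewrite rmorphM /= conj_ratr. Qed.

Lemma emb_conj x : (emb x)^* = emb (qconj x).
Proof.
have hs : s2^* = s2 by rewrite geC0_conj // sqrtC_ge0 ler0n.
rewrite /emb /qconj /= !rmorphD /= !conjM_r conj_ratr rmorphM /= hs conjCi.
rewrite !rmorphN /=; ring.
Qed.

Lemma emb0 : emb q0 = 0.
Proof. by rewrite /emb /= !rmorph0 /=; ring. Qed.

Definition qr (r : rat) := mkQ4 r 0 0 0.
Lemma emb_r r : emb (qr r) = ratr r.
Proof. by rewrite /emb /= !rmorph0 /=; ring. Qed.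

Lemma emb_sum_seq (T : Type) (s : seq T) (F : T -> Q4) :
  \sum_(k <- s) emb (F k) = emb (foldr (fun k acc => qadd (F k) acc) q0 s).
Proof.
elim: s => [|k s IH]; first by rewrite big_nil emb0.
by rewrite big_cons IH /= emb_add.
Qed.


Lemma bit_val n (x : 'I_(2 ^ n)) i : val (bit x i) = odd (x %/ 2 ^ i).
Proof. rewrite /bit /= inordK //; by case: odd. Qed.

Lemma bin_expand n (x : nat) : (x < 2 ^ n)%N -> x = (\sum_(i < n) odd (x %/ 2 ^ i) * 2 ^ i)%N.
Proof.
elim: n x => [|n IH] x hx.
  by rewrite big_ord0; move: hx; rewrite expn0 ltnS leqn0 => /eqP.
rewrite big_ord_recl /= expn0 divn1 muln1.
have hx2 : (x./2 < 2 ^ n)%N.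
  by move: hx; rewrite expnS -divn2 ltn_divLR // mulnC.
have E : (\sum_(i < n) odd (x %/ 2 ^ (bump 0 i)) * 2 ^ (bump 0 i) = 2 * x./2)%N.
  rewrite [in RHS](IH _ hx2) big_distrr /=; apply: eq_bigr => i _.
  by rewrite /bump /= add1n expnS divnMA divn2 mulnCA.
by rewrite E -[in LHS](odd_double_half x) -mul2n.
Qed.

Lemma bits_inj n (x y : 'I_(2 ^ n)) : (forall i, bit x i = bit y i) -> x = y.
Proof.
move=> h; apply: val_inj => /=.
rewrite (bin_expand (ltn_ord x)) (bin_expand (ltn_ord y)).
apply: eq_bigr => i _; congr (_ * _)%N.
by move: (congr1 val (h i)); rewrite !bit_val.
Qed.

Definition bitsf n (x : 'I_(2 ^ n)) : {ffun 'I_n -> 'I_2} := [ffun i => bit x i].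

Lemma bitsf_bij n : bijective (@bitsf n).
Proof.
apply: inj_card_bij.
  by move=> x y /ffunP h; apply: bits_inj => i; move: (h i); rewrite !ffunE.
by rewrite card_ffun !card_ord.
Qed.

Lemma bitsum n (F : 'I_n -> 'I_2 -> algC) :
  \sum_(x < 2 ^ n) \prod_(i < n) F i (bit x i) = \prod_(i < n) \sum_(t < 2) F i t.
Proof.
rewrite bigA_distr_bigA /= (reindex (@bitsf n)) /=.
  by apply: eq_bigr => x _; apply: eq_bigr => i _; rewrite ffunE.
by apply: onW_bij; apply: bitsf_bij.
Qed.

Lemma bits_eq n (x y : 'I_(2 ^ n)) :
  \prod_(i < n) ((bit x i == bit y i)%:R : algC) = (x == y)%:R.
Proof.
case: (eqVneq x y) => [->|nxy].
  by rewrite big1 // => i _; rewrite eqxx.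
have [i hi] : exists i, bit x i != bit y i.
  apply/existsP; apply: contraR nxy; rewrite negb_exists => /forallP h.
  by apply/eqP/bits_inj => i; move: (h i); rewrite negbK => /eqP.
by rewrite (bigD1 i) //= (negbTE hi) mul0r.
Qed.


Definition cl1_list : seq Cl1 := [:: (@Ordinal 6 0 isT, @Ordinal 4 0 isT);
  (@Ordinal 6 0 isT, @Ordinal 4 1 isT);
  (@Ordinal 6 0 isT, @Ordinal 4 2 isT);
  (@Ordinal 6 0 isT, @Ordinal 4 3 isT);
  (@Ordinal 6 1 isT, @Ordinal 4 0 isT);
  (@Ordinal 6 1 isT, @Ordinal 4 1 isT);
  (@Ordinal 6 1 isT, @Ordinal 4 2 isT);
  (@Ordinal 6 1 isT, @Ordinal 4 3 isT);
  (@Ordinal 6 2 isT, @Ordinal 4 0 isT);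
  (@Ordinal 6 2 isT, @Ordinal 4 1 isT);
  (@Ordinal 6 2 isT, @Ordinal 4 2 isT);
  (@Ordinal 6 2 isT, @Ordinal 4 3 isT);
  (@Ordinal 6 3 isT, @Ordinal 4 0 isT);
  (@Ordinal 6 3 isT, @Ordinal 4 1 isT);
  (@Ordinal 6 3 isT, @Ordinal 4 2 isT);
  (@Ordinal 6 3 isT, @Ordinal 4 3 isT);
  (@Ordinal 6 4 isT, @Ordinal 4 0 isT);
  (@Ordinal 6 4 isT, @Ordinal 4 1 isT);
  (@Ordinal 6 4 isT, @Ordinal 4 2 isT);
  (@Ordinal 6 4 isT, @Ordinal 4 3 isT);
  (@Ordinal 6 5 isT, @Ordinal 4 0 isT);
  (@Ordinal 6 5 isT, @Ordinal 4 1 isT);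
  (@Ordinal 6 5 isT, @Ordinal 4 2 isT);
  (@Ordinal 6 5 isT, @Ordinal 4 3 isT)].

Lemma mem_cl1 g : g \in cl1_list.
Proof.
case: g => [[a ha] [b hb]].
by case: a ha => [|[|[|[|[|[|a]]]]]] ha //; case: b hb => [|[|[|[|b]]]] hb.
Qed.

Lemma sumCl1 (V : nmodType) (F : Cl1 -> V) :
  \sum_(g : Cl1) F g = \sum_(g <- cl1_list) F g.
Proof.
rewrite -big_enum /=; apply: perm_big.
apply: uniq_perm; first exact: enum_uniq.
  by [].
move=> g; rewrite mem_enum inE; apply/esym.
change ((g \in cl1_list) = true).
case: g => [[a ha] [b hb]].
by case: a ha => [|[|[|[|[|[|a]]]]]] ha //; case: b hb => [|[|[|[|b]]]] hb.
Qed.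

Definition Qm := nat -> nat -> Q4.
Definition rep (m k : nat) (M : 'M[algC]_(m, k)) (Q : Qm) :=
  forall (i : 'I_m) (j : 'I_k), M i j = emb (Q i j).

Definition qmmk (k : nat) (P Q : Qm) : Qm := fun i j =>
  foldr (fun l acc => qadd (qmul (P i l) (Q l j)) acc) q0 (iota 0 k).

Lemma rep_mul m k p (A : 'M_(m, k)) (B : 'M_(k, p)) P Q :
  rep A P -> rep B Q -> rep (A *m B) (qmmk k P Q).
Proof.
move=> hA hB i j; rewrite mxE.
under eq_bigr => l _ do rewrite hA hB -emb_mul.
rewrite -(big_mkord xpredT (fun l => emb (qmul (P i l) (Q l j)))).
by rewrite /index_iota subn0 emb_sum_seq.
Qed.

Definition qadj (P : Qm) : Qm := fun i j => qconj (P j i).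
Lemma rep_adj m k (A : 'M_(m, k)) P : rep A P -> rep (hadj A) (qadj P).
Proof. by move=> hA i j; rewrite /hadj !mxE hA emb_conj. Qed.

Definition qmadd (P Q : Qm) : Qm := fun i j => qadd (P i j) (Q i j).
Lemma rep_add m k (A B : 'M_(m, k)) P Q : rep A P -> rep B Q -> rep (A + B) (qmadd P Q).
Proof. by move=> hA hB i j; rewrite !mxE hA hB emb_add. Qed.

Definition qsc (c : Q4) (P : Qm) : Qm := fun i j => qmul c (P i j).
Lemma rep_sc m k (A : 'M_(m, k)) P (c : algC) q : c = emb q -> rep A P -> rep (c *: A) (qsc q P).
Proof. by move=> -> hA i j; rewrite !mxE hA emb_mul. Qed.

Definition qneg (x : Q4) := mkQ4 (- q1 x) (- qi x) (- qs x) (- qis x).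
Lemma emb_neg x : emb (qneg x) = - emb x.
Proof. rewrite /emb /= !rmorphN /=; ring. Qed.

Lemma rep_sub m k (A B : 'M_(m, k)) P Q : rep A P -> rep B Q ->
  rep (A - B) (qmadd P (qsc (qr (-1)) Q)).
Proof.
move=> hA hB i j; rewrite !mxE hA hB /qmadd /qsc emb_add emb_mul emb_r.
by rewrite rmorphN rmorph1 mulN1r.
Qed.

Definition qsumCl (P : Cl1 -> Qm) : Qm := fun i j =>
  foldr (fun g acc => qadd (P g i j) acc) q0 cl1_list.
Lemma rep_sumCl m k (F : Cl1 -> 'M_(m, k)) P :
  (forall g, rep (F g) (P g)) -> rep (\sum_(g : Cl1) F g) (qsumCl P).
Proof.
move=> hF i j; rewrite summxE sumCl1.
under eq_bigr => g _ do rewrite hF.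
by rewrite emb_sum_seq.
Qed.

Definition qdg (P : Qm) : Qm := fun i j => if i == j then P i i else q0.
Definition dg m (A : 'M[algC]_m) : 'M[algC]_m := \matrix_(i, j) ((i == j)%:R * A i i).
Lemma rep_dg m (A : 'M_m) P : rep A P -> rep (dg A) (qdg P).
Proof.
move=> hA i j; rewrite mxE /qdg; case: (eqVneq i j) => [->|nij].
  by rewrite eqxx mul1r hA.
have -> : (nat_of_ord i == nat_of_ord j) = false by apply/negbTE.
by rewrite mul0r emb0.
Qed.

Definition qtr (P : Qm) (m : nat) : Q4 := foldr (fun l acc => qadd (P l l) acc) q0 (iota 0 m).
Lemma rep_tr m (A : 'M_m) P : rep A P -> \tr A = emb (qtr P m).
Proof.
move=> hA; rewrite /mxtrace.
under eq_bigr => l _ do rewrite hA.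
rewrite -(big_mkord xpredT (fun l => emb (P l l))).
by rewrite /index_iota subn0 emb_sum_seq.
Qed.

Definition qone := qr 1.
Lemma emb1 : emb qone = 1.
Proof. by rewrite emb_r rmorph1. Qed.
Definition qdelta (s t : nat) : Qm := fun i j => if (i == s) && (j == t) then qone else q0.
Lemma rep_delta m k (s : 'I_m) (t : 'I_k) : rep (delta_mx s t) (qdelta s t).
Proof.
move=> i j; rewrite mxE /qdelta.
have -> : (nat_of_ord i == nat_of_ord s) = (i == s) by [].
have -> : (nat_of_ord j == nat_of_ord t) = (j == t) by [].
by case: (i == s); case: (j == t) => /=; rewrite ?emb1 ?emb0.
Qed.
Lemma rep_one m : rep (1%:M : 'M[algC]_m) (qdelta 0 0 ) -> True.
Proof. by []. Qed.
Definition qid : Qm := fun i j => if i == j then qone else q0.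
Lemma rep_id m : rep (1%:M : 'M[algC]_m) qid.
Proof.
move=> i j; rewrite mxE /qid.
case: (eqVneq i j) => [->|nij]; first by rewrite eqxx emb1.
have -> : (nat_of_ord i == nat_of_ord j) = false by apply/negbTE.
by rewrite emb0.
Qed.


Definition qh := mkQ4 0 0 (1/2%:R) 0.
Lemma s2_neq0 : s2 != 0.
Proof. by rewrite sqrtC_eq0 pnatr_eq0. Qed.
Lemma isq2E : isq2 = emb qh.
Proof.
have h2 : (ratr (1 / 2%:R) : algC) = 1 / 2%:R.
  by rewrite rmorphM /= rmorph1 fmorphV /= rmorph_nat.
rewrite /isq2 /emb /= !rmorph0 /= h2 -/s2.
apply: (mulfI s2_neq0); rewrite mulfV ?s2_neq0 //.
rewrite !mul0r !add0r addr0 mulrCA -[in RHS]mulrA s2s2.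
by rewrite mul1r mulrC divff // pnatr_eq0.
Qed.

Definition qI : Q4 := mkQ4 0 1 0 0.
Lemma embI : emb qI = 'i.
Proof. rewrite /emb /= rmorph0 rmorph1 /=; ring. Qed.

Definition Hq : Qm := fun i j => if (i == 1)%N && (j == 1)%N then qneg qh else qh.
Definition Sq : Qm := fun i j => if i == j then (if i == 0%N then qone else qI) else q0.
Definition Xq : Qm := fun i j => if i != j then qone else q0.
Definition Zq : Qm := fun i j => if i == j then (if i == 0%N then qone else qneg qone) else q0.
Definition Yq : Qm := qsc qI (qmmk 2 Xq Zq).

Ltac ord2 := move=> [[|[|//]] ?] [[|[|//]] ?]; rewrite !mxE /=.

Definition o1 : 'I_2 := @Ordinal 2 1 isT.
Lemma ord2_ind (P : 'I_2 -> Prop) : P ord0 -> P o1 -> forall i, P i.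
Proof.
move=> h0 h1 [[|[|m]] hm].
- by rewrite (_ : Ordinal hm = ord0) //; apply: val_inj.
- by rewrite (_ : Ordinal hm = o1) //; apply: val_inj.
- by exfalso; move: hm; rewrite !ltnS ltn0.
Qed.


Definition qmemo (P : Qm) : Qm :=
  let a := P 0%N 0%N in let b := P 0%N 1%N in let c := P 1%N 0%N in let d := P 1%N 1%N in
  fun i j => if i == 0%N then (if j == 0%N then a else b) else (if j == 0%N then c else d).
Lemma rep_memo (A : 'M[algC]_2) P : rep A P -> rep A (qmemo P).
Proof. by move=> h i j; rewrite h; move: i j; apply: ord2_ind; apply: ord2_ind. Qed.
Definition qmm2 (P Q : Qm) : Qm := qmemo (qmmk 2 P Q).
Lemma rep_mul2 (A B : 'M[algC]_2) P Q : rep A P -> rep B Q -> rep (A *m B) (qmm2 P Q).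
Proof. by move=> hA hB; apply: rep_memo; apply: rep_mul. Qed.


Lemma rep_H : rep Hgate Hq.
Proof. by ord2; rewrite /Hq /= ?emb_neg isq2E. Qed.
Lemma rep_S : rep Sgate Sq.
Proof. by ord2; rewrite /Sq /= ?emb1 ?emb0 ?embI. Qed.
Lemma rep_X : rep PauliX Xq.
Proof. by ord2; rewrite /Xq /= ?emb1 ?emb0. Qed.
Lemma rep_Z : rep PauliZ Zq.
Proof. by ord2; rewrite /Zq /= ?emb_neg ?emb1 ?emb0. Qed.
Lemma rep_Y : rep PauliY Yq.
Proof. apply: rep_sc; first by rewrite embI. exact: rep_mul rep_X rep_Z. Qed.
Lemma rep_I2 : rep (1%:M : 'M[algC]_2) qid.
Proof. exact: rep_id. Qed.

Definition clpermq (a : nat) : Qm :=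
  match a with
  | 0 => qid | 1 => Hq | 2 => Sq | 3 => qmmk 2 Hq Sq | 4 => qmmk 2 Sq Hq
  | _ => qmmk 2 (qmmk 2 Hq Sq) Hq end.
Definition pauliq (b : nat) : Qm :=
  match b with 0 => qid | 1 => Xq | 2 => Yq | _ => Zq end.
Definition cl1q (g : Cl1) : Qm := qmm2 (pauliq (val g.2)) (clpermq (val g.1)).

Lemma rep_cl1 g : rep (cl1_mx g) (cl1q g).
Proof.
apply: rep_mul2.
  rewrite /pauli /pauliq; case: (val g.2) => [|[|[|?]]].
  - exact: rep_I2.
  - exact: rep_X.
  - exact: rep_Y.
  - exact: rep_Z.
rewrite /cl_perm /clpermq; case: (val g.1) => [|[|[|[|[|?]]]]].
- exact: rep_I2.
- exact: rep_H.
- exact: rep_S.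
- exact: rep_mul rep_H rep_S.
- exact: rep_mul rep_S rep_H.
- exact: rep_mul (rep_mul rep_H rep_S) rep_H.
Qed.

Definition Kq : Qm := fun i j => if i == 0%N then qh else qmul qh (qmul (qadd qone qI) qh).
Lemma rep_ket : rep ketH Kq.
Proof.
move=> [[|[|//]] ?] [[|//] ?]; rewrite !mxE /Kq /=; first by rewrite isq2E.
by rewrite !emb_mul emb_add emb1 embI isq2E.
Qed.
Definition Pq : Qm := qmmk 1 Kq (qadj Kq).
Lemma rep_projH : rep projH Pq.
Proof. exact: rep_mul rep_ket (rep_adj rep_ket). Qed.

Definition qmeq2 (P Q : Qm) :=
  all (fun i => all (fun j => qeq (P i j) (Q i j)) (iota 0 2)) (iota 0 2).
Lemma rep_eq2 (A B : 'M[algC]_2) P Q : rep A P -> rep B Q -> qmeq2 P Q -> A = B.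
Proof.
move=> hA hB /allP h; apply/matrixP => i j; rewrite hA hB.
have hi : (nat_of_ord i \in iota 0 2) by rewrite mem_iota leq0n add0n ltn_ord.
have /allP h2 := h i hi.
by rewrite (qeqP (h2 j _)) // mem_iota leq0n add0n ltn_ord.
Qed.

Definition c24 : algC := 24%:R^-1.
Definition q24 := qr (24%:R^-1).
Lemma emb24 : c24 = emb q24.
Proof. by rewrite emb_r fmorphV rmorph_nat. Qed.

Definition S1 (X : 'M[algC]_2) : 'M[algC]_2 :=
  c24 *: \sum_(g : Cl1) (hadj (cl1_mx g) *m dg (cl1_mx g *m X *m hadj (cl1_mx g)) *m cl1_mx g).
Definition T1 (X : 'M[algC]_2) : 'M[algC]_2 := 3%:R *: X - \tr X *: 1%:M.

Definition qS1 (P : Qm) : Qm := qmemo (qsc q24 (qsumCl (fun g =>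
  qmm2 (qmm2 (qadj (cl1q g)) (qdg (qmm2 (qmm2 (cl1q g) P) (qadj (cl1q g))))) (cl1q g)))).
Lemma rep_S1 X P : rep X P -> rep (S1 X) (qS1 P).
Proof.
move=> hX; apply: rep_memo; apply: rep_sc; first exact: emb24.
apply: rep_sumCl => g.
apply: rep_mul2; last exact: rep_cl1.
apply: rep_mul2; first exact: (rep_adj (rep_cl1 g)).
apply: rep_dg; apply: rep_mul2; last exact: (rep_adj (rep_cl1 g)).
by apply: rep_mul2; first exact: rep_cl1.
Qed.

Definition qT1 (P : Qm) : Qm := qmemo (qmadd (qsc (qr 3%:R) P) (qsc (qr (-1)) (qsc (qtr P 2) qid))).
Lemma rep_T1 X P : rep X P -> rep (T1 X) (qT1 P).
Proof.
move=> hX; apply: rep_memo; apply: rep_sub.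
  by apply: rep_sc => //; rewrite emb_r rmorph_nat.
by apply: rep_sc; [exact: rep_tr | exact: rep_id].
Qed.

Lemma F1 (s t : 'I_2) : T1 (S1 (delta_mx s t)) = delta_mx s t.
Proof.
apply: rep_eq2 (rep_T1 (rep_S1 (rep_delta s t))) (rep_delta s t) _.
move: s t; apply: ord2_ind; apply: ord2_ind; vm_compute; reflexivity.
Qed.

Definition xs (g : Cl1) : 'I_2 :=
  if (val g.1 == 3%N) (+) ((val g.2 == 1%N) || (val g.2 == 2%N)) then o1 else ord0.
Definition sig1 (g : Cl1) : 'M[algC]_2 :=
  hadj (cl1_mx g) *m delta_mx (xs g) (xs g) *m cl1_mx g.
Definition qsig (g : Cl1) : Qm := qmm2 (qmm2 (qadj (cl1q g)) (qdelta (xs g) (xs g))) (cl1q g).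
Lemma rep_sig g : rep (sig1 g) (qsig g).
Proof.
apply: rep_mul2; last exact: rep_cl1.
apply: rep_mul2; [exact: rep_adj (rep_cl1 g) | exact: rep_delta].
Qed.

Lemma F2 g : \tr (sig1 g) = 1.
Proof.
rewrite (rep_tr (rep_sig g)) -emb1; apply: (congr1 emb); apply: qeqP.
have : all (fun g => qeq (qtr (qsig g) 2) qone) cl1_list by vm_compute.
by move/allP; apply; apply: mem_cl1.
Qed.

Definition Y1 (g : Cl1) : 'M[algC]_2 :=
  hadj (cl1_mx g) *m dg (cl1_mx g *m sig1 g *m hadj (cl1_mx g)) *m cl1_mx g.
Definition qY (g : Cl1) : Qm :=
  qmm2 (qmm2 (qadj (cl1q g)) (qdg (qmm2 (qmm2 (cl1q g) (qsig g)) (qadj (cl1q g))))) (cl1q g).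
Lemma rep_Y1 g : rep (Y1 g) (qY g).
Proof.
apply: rep_mul2; last exact: rep_cl1.
apply: rep_mul2; first exact: (rep_adj (rep_cl1 g)).
apply: rep_dg; apply: rep_mul2; last exact: (rep_adj (rep_cl1 g)).
by apply: rep_mul2; [exact: rep_cl1 | exact: rep_sig].
Qed.

Definition qq := mkQ4 (1/2%:R) 0 (1/2%:R) 0.


Lemma F4 (t : 'I_2) : projH t t = 1/2%:R.
Proof.
rewrite rep_projH.
have -> : 1/2%:R = emb (qr (1/2%:R)).
  by rewrite emb_r rmorphM /= rmorph1 fmorphV /= rmorph_nat.
apply: (congr1 emb); apply: qeqP; move: t; apply: ord2_ind; vm_compute; reflexivity.
Qed.


Section NQ.
Variable n : nat.
Implicit Types A B : 'I_n -> 'M[algC]_2.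

Lemma ntensE A x y : ntens A x y = \prod_(i < n) A i (bit x i) (bit y i).
Proof. by rewrite mxE. Qed.

Lemma ntens_mul A B : ntens A *m ntens B = ntens (fun i => A i *m B i).
Proof.
apply/matrixP => x y; rewrite !mxE.
under eq_bigr => k _ do rewrite !ntensE -big_split /=.
rewrite (bitsum (fun i t => A i (bit x i) t * B i t (bit y i))).
by apply: eq_bigr => i _; rewrite mxE.
Qed.

Lemma hadj_ntens A : hadj (ntens A) = ntens (fun i => hadj (A i)).
Proof.
apply/matrixP => x y; rewrite !mxE rmorph_prod.
by apply: eq_bigr => i _; rewrite !mxE.
Qed.

Lemma tr_ntens A : \tr (ntens A) = \prod_(i < n) \tr (A i).
Proof.
rewrite /mxtrace; under eq_bigr => x _ do rewrite ntensE.
by rewrite (bitsum (fun i t => A i t t)).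
Qed.

Lemma hs_E (a : 'I_(2 ^ n)) (Z : 'M[algC]_(2 ^ n)) : hs (Ebas a) Z = Z a a.
Proof.
rewrite /hs /mxtrace (bigD1 a) //= big1 => [|k ka]; last first.
  rewrite mxE big1 // => l _; rewrite !mxE (negbTE ka) /=.
  by rewrite andbF conjC_nat mul0r.
rewrite addr0 mxE (bigD1 a) //= big1 => [|l la]; last first.
  by rewrite !mxE (negbTE la) /= conjC_nat mul0r.
by rewrite !mxE !eqxx /= conjC_nat mul1r addr0.
Qed.

Lemma Mmeas_dg (Z : 'M[algC]_(2 ^ n)) : Mmeas Z = dg Z.
Proof.
apply/matrixP => a b; rewrite /Mmeas summxE mxE.
under eq_bigr => k _ do rewrite !mxE hs_E.
rewrite (bigD1 a) //= big1 => [|x xa]; last first.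
  case: (eqVneq a x) => [ax|_]; last by rewrite mulr0.
  by rewrite ax eqxx in xa.
by rewrite addr0 eqxx /= mulrC (eq_sym b a).
Qed.

Lemma dg_ntens A : dg (ntens A) = ntens (fun i => dg (A i)).
Proof.
apply/matrixP => x y; rewrite !mxE.
under [RHS]eq_bigr => i _ do rewrite mxE.
by rewrite big_split /= bits_eq.
Qed.

Lemma delta_ntens (c e : 'I_(2 ^ n)) :
  delta_mx c e = ntens (fun i => delta_mx (bit c i) (bit e i)).
Proof.
apply/matrixP => x y; rewrite !mxE.
under [RHS]eq_bigr => i _ do rewrite mxE -mulnb natrM.
by rewrite big_split /= !bits_eq -natrM mulnb.
Qed.

Lemma card_LCl : #|LCl n| = (24 ^ n)%N.
Proof. by rewrite card_ffun card_prod !card_ord. Qed.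

Lemma avg_prod (F : Cl1 -> 'I_n -> algC) :
  #|LCl n|%:R^-1 * \sum_(g : LCl n) \prod_(i < n) F (g i) i =
  \prod_(i < n) (c24 * \sum_(g1 : Cl1) F g1 i).
Proof.
rewrite big_split /= prodr_const card_ord card_LCl natrX exprVn.
congr (_ * _).
by rewrite (bigA_distr_bigA (fun i g1 => F g1 i)).
Qed.

Lemma avg_ntens (F : 'I_n -> Cl1 -> 'M[algC]_2) :
  #|LCl n|%:R^-1 *: \sum_(g : LCl n) ntens (fun i => F i (g i)) =
  ntens (fun i => c24 *: \sum_(g1 : Cl1) F i g1).
Proof.
apply/matrixP => x y; rewrite !mxE summxE.
under eq_bigr => g _ do rewrite ntensE.
rewrite (avg_prod (fun g1 i => F i g1 (bit x i) (bit y i))).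
by apply: eq_bigr => i _; rewrite !mxE summxE.
Qed.

End NQ.


Definition smap (n : nat) (F : 'M[algC]_2 -> 'M[algC]_2) (A : 'M[algC]_(2 ^ n)) : 'M[algC]_(2 ^ n) :=
  \sum_(c < 2 ^ n) \sum_(e < 2 ^ n) A c e *: ntens (fun i => F (delta_mx (bit c i) (bit e i))).
Arguments smap n F A : clear implicits.

Lemma pmap_linear n F : linear (smap n F).
Proof.
move=> a u v; rewrite /smap scaler_sumr -big_split /=; apply: eq_bigr => c _.
rewrite scaler_sumr -big_split /=; apply: eq_bigr => e _.
by rewrite !mxE scalerDl scalerA.
Qed.

HB.instance Definition _ n F := GRing.isLinear.Build algC 'M[algC]_(2 ^ n) 'M[algC]_(2 ^ n)
  *:%R (smap n F) (@pmap_linear n F).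

Definition dec (F : 'M[algC]_2 -> 'M[algC]_2) :=
  forall X, F X = \sum_(s < 2) \sum_(t < 2) X s t *: F (delta_mx s t).

Lemma pmap_ntens n F B : dec F -> smap n F (ntens B) = ntens (fun i => F (B i)).
Proof.
move=> hF; apply/matrixP => x y; rewrite /smap summxE.
under eq_bigr => c _ do rewrite summxE.
under eq_bigr => c _ do under eq_bigr => e _ do rewrite !mxE -big_split /=.
under eq_bigr => c _ do rewrite (bitsum (fun i t => B i (bit c i) t *
   F (delta_mx (bit c i) t) (bit x i) (bit y i))).
rewrite (bitsum (fun i s => \sum_(t < 2) B i s t * F (delta_mx s t) (bit x i) (bit y i))).
rewrite ntensE; apply: eq_bigr => i _; rewrite (hF (B i)) summxE.
by apply: eq_bigr => s _; rewrite summxE; apply: eq_bigr => t _; rewrite mxE.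
Qed.

Lemma pmap_ext n F G A : (forall s t, F (delta_mx s t) = G (delta_mx s t)) -> smap n F A = smap n G A.
Proof.
move=> h; rewrite /smap; apply: eq_bigr => c _; apply: eq_bigr => e _.
by congr (_ *: _); congr ntens; apply: functional_extensionality => i; rewrite h.
Qed.

Lemma pmap_id n A : smap n id A = A.
Proof.
rewrite /smap [RHS]matrix_sum_delta; apply: eq_bigr => c _; apply: eq_bigr => e _.
by rewrite delta_ntens.
Qed.

Lemma pmap_comp n F G A : dec F -> smap n F (smap n G A) = smap n (fun X => F (G X)) A.
Proof.
move=> hF; rewrite {2}/smap linear_sum /smap; apply: eq_bigr => c _.
rewrite linear_sum; apply: eq_bigr => e _.
by rewrite linearZ /= pmap_ntens.
Qed.

Lemma T1_linear : linear T1.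
Proof.
move=> a u v; rewrite /T1 mxtraceD mxtraceZ; apply/matrixP => i j; rewrite !mxE; ring.
Qed.
HB.instance Definition _ := GRing.isLinear.Build algC 'M[algC]_2 'M[algC]_2 *:%R T1 T1_linear.

Lemma dec_T1 : dec T1.
Proof.
move=> X; rewrite {1}(matrix_sum_delta X) linear_sum; apply: eq_bigr => s _.
by rewrite linear_sum; apply: eq_bigr => t _; rewrite linearZ.
Qed.

Lemma dg_lin m a (u v : 'M[algC]_m) : dg (a *: u + v) = a *: dg u + dg v.
Proof. by apply/matrixP => i j; rewrite !mxE; ring. Qed.

Lemma omega_lin n (g : LCl n) a u v : omega g (a *: u + v) = a *: omega g u + omega g v.
Proof. by rewrite /omega mulmxDr mulmxDl -scalemxAr -scalemxAl. Qed.
Lemma omega_adj_lin n (g : LCl n) a u v : omega_adj g (a *: u + v) = a *: omega_adj g u + omega_adj g v.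
Proof. by rewrite /omega_adj mulmxDr mulmxDl -scalemxAr -scalemxAl. Qed.

Lemma MmeasE n : @Mmeas n = @dg (2 ^ n).
Proof. exact: functional_extensionality (@Mmeas_dg n). Qed.

Lemma frameS_linear n : linear (@frameS n).
Proof.
move=> a u v; rewrite /frameS /unif_mean_op MmeasE.
under eq_bigr => g _ do rewrite omega_lin dg_lin omega_adj_lin.
by rewrite big_split /= -scaler_sumr scalerDr !scalerA mulrC.
Qed.
HB.instance Definition _ n := GRing.isLinear.Build algC 'M[algC]_(2 ^ n) 'M[algC]_(2 ^ n)
  *:%R (@frameS n) (@frameS_linear n).

Lemma frameS_ntens n (B : 'I_n -> 'M[algC]_2) :
  @frameS n (ntens B) = ntens (fun i => S1 (B i)).
Proof.
rewrite /frameS /unif_mean_op.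
under eq_bigr => g _ do rewrite /omega_adj /omega /lcl_mx !hadj_ntens !ntens_mul Mmeas_dg
  dg_ntens !ntens_mul.
by rewrite (avg_ntens (fun i g1 => hadj (cl1_mx g1) *m dg (cl1_mx g1 *m B i *m hadj (cl1_mx g1)) *m cl1_mx g1)).
Qed.

Lemma frameS_pmap n : @frameS n = smap n S1.
Proof.
apply: functional_extensionality => A.
rewrite {1}(matrix_sum_delta A) linear_sum; apply: eq_bigr => c _.
rewrite linear_sum; apply: eq_bigr => e _.
by rewrite linearZ /= delta_ntens frameS_ntens.
Qed.

Lemma TS_id n A : smap n T1 (smap n S1 A) = A.
Proof.
rewrite pmap_comp; last exact: dec_T1.
by rewrite (@pmap_ext n _ id) ?pmap_id // => s t; rewrite F1.
Qed.

Lemma sinv_frameS n Y : sinv (@frameS n) Y = smap n T1 Y.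
Proof.
rewrite /sinv frameS_pmap.
set L1 := lin_mx (smap n S1); set L2 := lin_mx (smap n T1).
have h12 : L1 *m L2 = 1%:M.
  apply/row_matrixP => i; rewrite row_mul !rowE mulmx1.
  by rewrite mul_rV_lin /= mul_rV_lin /= mxvecK TS_id vec_mxK.
have [uL1 _] := mulmx1_unit h12.
have -> : invmx L1 = L2.
  by rewrite -[RHS]mul1mx -(mulVmx uL1) -mulmxA h12 mulmx1.
by rewrite mul_vec_lin mxvecK.
Qed.


Lemma hadj_mul m k p (A : 'M[algC]_(m, k)) (B : 'M[algC]_(k, p)) :
  hadj (A *m B) = hadj B *m hadj A.
Proof.
apply/matrixP => i j; rewrite !mxE rmorph_sum; apply: eq_bigr => l _.
by rewrite !mxE rmorphM mulrC.
Qed.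

Lemma hadjE m k (A : 'M[algC]_(m, k)) i j : hadj A i j = (A j i)^*.
Proof. by rewrite !mxE. Qed.

Lemma hadjK m k (A : 'M[algC]_(m, k)) : hadj (hadj A) = A.
Proof. by apply/matrixP => i j; rewrite !mxE conjCK. Qed.

Lemma hadj_delta m k (i : 'I_m) (j : 'I_k) : hadj (delta_mx i j) = delta_mx j i.
Proof. by apply/matrixP => a b; rewrite !mxE conjC_nat andbC. Qed.

Lemma mulmx_delta_r m k p (A : 'M[algC]_(m, k)) (x : 'I_k) (y : 'I_p) z l :
  (A *m delta_mx x y) z l = A z x * (l == y)%:R.
Proof.
rewrite mxE (bigD1 x) //= big1 => [|l' h]; last by rewrite mxE (negbTE h) mulr0.
by rewrite mxE eqxx addr0.
Qed.

Lemma mul_delta_entry m k p (A : 'M[algC]_(m, k)) (x : 'I_k) (B : 'M[algC]_(k, p)) z w :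
  (A *m delta_mx x x *m B) z w = A z x * B x w.
Proof.
rewrite mxE (bigD1 x) //= big1 => [|l lx]; last by rewrite mulmx_delta_r (negbTE lx) mulr0 mul0r.
by rewrite mulmx_delta_r eqxx mulr1 addr0.
Qed.

Lemma tr_mul_delta m (A : 'M[algC]_m) t : \tr (A *m delta_mx t t) = A t t.
Proof.
rewrite /mxtrace (bigD1 t) //= big1 => [|k kt]; last by rewrite mulmx_delta_r (negbTE kt) mulr0.
by rewrite mulmx_delta_r eqxx mulr1 addr0.
Qed.

Lemma hs_ntens n (A B : 'I_n -> 'M[algC]_2) :
  hs (ntens A) (ntens B) = \prod_(i < n) hs (A i) (B i).
Proof. by rewrite /hs hadj_ntens ntens_mul tr_ntens. Qed.

Lemma hs_lin m (A : 'M[algC]_m) a X Y : hs A (a *: X + Y) = a * hs A X + hs A Y.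
Proof. by rewrite /hs mulmxDr -scalemxAr mxtraceD mxtraceZ. Qed.

Lemma dgZ m a (u : 'M[algC]_m) : dg (a *: u) = a *: dg u.
Proof. by apply/matrixP => i j; rewrite !mxE; ring. Qed.
Lemma dgD m (u v : 'M[algC]_m) : dg (u + v) = dg u + dg v.
Proof. by apply/matrixP => i j; rewrite !mxE; ring. Qed.

Lemma hsZ m (A : 'M[algC]_m) a X : hs A (a *: X) = a * hs A X.
Proof. by rewrite /hs -scalemxAr mxtraceZ. Qed.
Lemma omega_adjZ n (g : LCl n) a u : omega_adj g (a *: u) = a *: omega_adj g u.
Proof. by rewrite /omega_adj -scalemxAr -scalemxAl. Qed.
Lemma omega_adjD n (g : LCl n) u v : omega_adj g (u + v) = omega_adj g u + omega_adj g v.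
Proof. by rewrite /omega_adj mulmxDr mulmxDl. Qed.

Lemma delta_sandwich m (i j : 'I_1) (k k' : 'I_m) (A : 'M[algC]_m) :
  delta_mx i k *m A *m delta_mx k' j = (A k k')%:M.
Proof.
apply/matrixP => a b; rewrite !ord1 mulmx_delta_r eqxx mulr1 [RHS]mxE eqxx mulr1n mxE.
rewrite (bigD1 k) //= big1 => [|l h]; last by rewrite mxE (negbTE h) andbF mul0r.
by rewrite mxE !eqxx mul1r addr0.
Qed.

Lemma sum_delta_diag m : \sum_(k < m) (delta_mx k k : 'M[algC]_m) = 1%:M.
Proof.
apply/matrixP => a b; rewrite summxE mxE (bigD1 a) //= big1 => [|k h].
  by rewrite mxE eqxx addr0 eq_sym.
by rewrite mxE eq_sym (negbTE h).
Qed.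

Section Main.
Variable n : nat.

Definition vg (g : LCl n) : 'cV[algC]_(2 ^ n) :=
  \col_z \prod_(i < n) (cl1_mx (g i) (xs (g i)) (bit z i))^*.
Definition Lam (g : LCl n) (A : 'M[algC]_(2 ^ n)) : 'M[algC]_(2 ^ n) :=
  \tr A *: (vg g *m hadj (vg g)).

Lemma vv_ntens g : vg g *m hadj (vg g) = ntens (fun i => sig1 (g i)).
Proof.
apply/matrixP => z w; rewrite !mxE big_ord1 !mxE rmorph_prod -big_split /=.
apply: eq_bigr => i _; rewrite mul_delta_entry !mxE conjCK; by [].
Qed.

Lemma tr_vv g : \tr (vg g *m hadj (vg g)) = 1.
Proof. by rewrite vv_ntens tr_ntens big1 // => i _; rewrite F2. Qed.

Lemma vv1 g : hadj (vg g) *m vg g = 1%:M.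
Proof.
apply/matrixP => i j; rewrite !ord1 [RHS]mxE eqxx mulr1n.
by have := tr_vv g; rewrite mxtrace_mulC /mxtrace big_ord1.
Qed.

Lemma Lam_channel g : is_channel (Lam g).
Proof.
exists (2 ^ n)%N, (fun k => vg g *m delta_mx 0 k); split.
  under eq_bigr => k _ do rewrite hadj_mul hadj_delta -mulmxA [hadj (vg g) *m _]mulmxA vv1 mul1mx
    mul_delta_mx.
  exact: sum_delta_diag.
move=> A; rewrite /Lam /mxtrace scaler_suml; apply: eq_bigr => k _.
rewrite hadj_mul hadj_delta !mulmxA.
have -> : vg g *m delta_mx 0 k *m A *m delta_mx k 0 *m hadj (vg g) =
  vg g *m (delta_mx 0 k *m A *m delta_mx k 0) *m hadj (vg g) by rewrite !mulmxA.
by rewrite delta_sandwich mul_mx_scalar -scalemxAl.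
Qed.

End Main.

Lemma F3' : hs projH (T1 (c24 *: \sum_(g1 : Cl1) Y1 g1)) = emb qq.
Proof.
rewrite /hs (rep_tr (rep_mul (rep_adj rep_projH) (rep_T1 (rep_sc emb24 (rep_sumCl rep_Y1))))).
apply: (congr1 emb); apply: qeqP; by vm_compute.
Qed.

Lemma pos2n n : (0 < 2 ^ n)%N.
Proof. by rewrite expn_gt0. Qed.

Lemma smapDZ n F a b (X Y : 'M[algC]_(2 ^ n)) :
  smap n F (a *: X + b *: Y) = a *: smap n F X + b *: smap n F Y.
Proof. by rewrite linearD !linearZ. Qed.

Section Main2.
Variable n : nat.
Definition x0 : 'I_(2 ^ n) := Ordinal (pos2n n).
Definition rho0 : 'M[algC]_(2 ^ n) := delta_mx x0 x0.
Definition Dp (rho : 'M[algC]_(2 ^ n)) :=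
  unif_mean_op (fun g A => omega_adj g (Mmeas (omega g (@Lam n g A)))) rho.

Lemma noisy_dec eps rho :
  frameS_noisy (@Lam n) eps rho = (1 - eps) *: @frameS n rho + eps *: Dp rho.
Proof.
rewrite /frameS_noisy /frameS /Dp /unif_mean_op /phi_eps MmeasE.
under eq_bigr => g _ do rewrite dgD !dgZ omega_adjD !omega_adjZ.
rewrite big_split /= -!scaler_sumr scalerDr !scalerA.
by rewrite [(1 - eps) * _]mulrC [eps * _]mulrC.
Qed.

Lemma rho_state : is_state rho0.
Proof.
split; last by rewrite -[rho0]mul1mx tr_mul_delta mxE eqxx.
split; first exact: hadj_delta.
move=> v; rewrite mul_delta_entry !mxE mulrC; exact: mul_conjC_ge0.
Qed.

Lemma tr_rho0 : \tr rho0 = 1.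
Proof. by case: rho_state. Qed.

Lemma Dp_rho : Dp rho0 = ntens (fun _ => c24 *: \sum_(g1 : Cl1) Y1 g1).
Proof.
rewrite /Dp /unif_mean_op /Lam tr_rho0.
under eq_bigr => g _ do rewrite scale1r vv_ntens /omega_adj /omega /lcl_mx !hadj_ntens !ntens_mul
  MmeasE dg_ntens !ntens_mul.
by rewrite (avg_ntens (fun i g1 => Y1 g1)).
Qed.

Lemma rho0_ntens : rho0 = ntens (fun i => delta_mx (bit x0 i) (bit x0 i)).
Proof. exact: delta_ntens. Qed.

Lemma trO : \tr (Obs n *m rho0) = (1 / 2%:R) ^+ n.
Proof.
rewrite rho0_ntens /Obs ntens_mul tr_ntens.
under eq_bigr => i _ do rewrite tr_mul_delta F4.
by rewrite prodr_const card_ord.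
Qed.

Lemma hsO : hs (Obs n) rho0 = (1 / 2%:R) ^+ n.
Proof.
rewrite rho0_ntens /Obs hs_ntens.
under eq_bigr => i _ do rewrite /hs tr_mul_delta hadjE F4.
rewrite prodr_const card_ord; congr (_ ^+ _).
by rewrite rmorphM rmorph1 fmorphV /= conjC_nat.
Qed.

Lemma hsOT : hs (Obs n) (smap n T1 (Dp rho0)) = (emb qq) ^+ n.
Proof.
rewrite Dp_rho pmap_ntens; last exact: dec_T1.
rewrite /Obs hs_ntens.
under eq_bigr => i _ do rewrite F3'.
by rewrite prodr_const card_ord.
Qed.

Lemma bias_eq eps : 0 <= eps ->
  bias (Obs n) rho0 (@Lam n) eps = `|(1 / 2%:R) ^+ n - (emb qq) ^+ n| * eps.
Proof.
move=> he; rewrite /bias sinv_frameS noisy_dec.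
rewrite smapDZ frameS_pmap TS_id hs_lin hsZ hsO hsOT trO.
have -> : (1 / 2%:R) ^+ n - ((1 - eps) * (1 / 2%:R) ^+ n + eps * emb qq ^+ n) =
  eps * ((1 / 2%:R) ^+ n - emb qq ^+ n) by ring.
by rewrite normrM (ger0_norm he) mulrC.
Qed.

End Main2.


Lemma s2_ge0 : 0 <= s2.
Proof. by rewrite sqrtC_ge0 ler0n. Qed.

Lemma qqE : emb qq = (1 + s2) / 2%:R.
Proof.
have h2 : (ratr (1 / 2%:R) : algC) = 1 / 2%:R.
  by rewrite rmorphM /= rmorph1 fmorphV /= rmorph_nat.
rewrite /emb /= h2 !rmorph0; ring.
Qed.

Lemma pow4 (R : comRingType) (s : R) : s * s = 2%:R -> (1 + s) ^+ 4 = 17%:R + 12%:R * s.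
Proof.
move=> hs.
have -> : (1 + s) ^+ 4 = 1 + 4%:R * s + 6%:R * (s * s) + 4%:R * (s * s) * s + (s * s) * (s * s) by ring.
rewrite hs; ring.
Qed.

Lemma s2_ge54 : 5%:R / 4%:R <= s2.
Proof.
have h0 : 0 <= 5%:R / 4%:R :> algC by rewrite divr_ge0 ?ler0n.
rewrite -(ler_pXn2r (n := 2)) // ?nnegrE ?s2_ge0 //.
rewrite [s2 ^+ 2]expr2 s2s2 expr2.
rewrite -subr_ge0.
have -> : 2%:R - 5%:R / 4%:R * (5%:R / 4%:R) = 7%:R / 16%:R :> algC.
  by field.
by rewrite divr_ge0 ?ler0n.
Qed.

Lemma q_ge0 : 0 <= emb qq.
Proof. by rewrite qqE divr_ge0 ?ler0n // addr_ge0 ?ler01 ?s2_ge0. Qed.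

Lemma q4_ge2 : 2%:R <= emb qq ^+ 4.
Proof.
rewrite qqE expr_div_n pow4 ?s2s2 //.
rewrite ler_pdivlMr ?exprn_gt0 ?ltr0n // -subr_ge0.
have -> : 17%:R + 12%:R * s2 - 2%:R * 2%:R ^+ 4 = 12%:R * (s2 - 5%:R / 4%:R) :> algC.
  by field; rewrite ?pnatr_eq0.
by rewrite mulr_ge0 ?ler0n // subr_ge0 s2_ge54.
Qed.

Lemma half_pow_le n : (1 <= n)%N -> (1 / 2%:R : algC) ^+ n <= 1 / 2%:R.
Proof.
case: n => [//|m] _.
rewrite exprS ler_piMr ?divr_ge0 ?ler01 ?ler0n //.
by rewrite exprn_ile1 // ?divr_ge0 ?ler01 ?ler0n // ler_pdivrMr ?ltr0n // mul1r ler1n.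
Qed.

Lemma main_ineq n : (1 <= n)%N ->
  1 / 2%:R * sqrtC (sqrtC (2 ^ n)%:R) <= `|(1 / 2%:R) ^+ n - emb qq ^+ n|.
Proof.
move=> n1.
set r := sqrtC (sqrtC (2 ^ n)%:R).
set Q := emb qq ^+ n.
set h := (1 / 2%:R : algC) ^+ n.
have r0 : 0 <= r by rewrite sqrtC_ge0 sqrtC_ge0 ler0n.
have Q0 : 0 <= Q by rewrite exprn_ge0 // q_ge0.
have h0 : 0 <= h by rewrite exprn_ge0 // divr_ge0 ?ler01 ?ler0n.
have r4 : r ^+ 4 = (2 ^ n)%:R.
  by rewrite /r (_ : 4%N = (2 * 2)%N) // exprM !sqrtCK.
have rQ : r <= Q.
  rewrite -(ler_pXn2r (n := 4)) ?nnegrE // r4 /Q -exprM mulnC exprM natrX.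
  by apply: lerXn2r; rewrite ?nnegrE ?ler0n ?exprn_ge0 ?q_ge0 // q4_ge2.
have r1 : 1 <= r.
  rewrite -(ler_pXn2r (n := 4)) ?nnegrE ?ler01 // r4 expr1n ler1n.
  by rewrite expn_gt0.
have hle : h <= 1 / 2%:R by exact: half_pow_le.
have hreal : h - Q \is Num.real by rewrite rpredB // ger0_real.
rewrite real_ler_normr //; apply/orP; right.
rewrite opprB.
apply: (le_trans _ (lerB rQ hle)).
rewrite -subr_ge0.
have -> : r - 1 / 2%:R - 1 / 2%:R * r = (r - 1) / 2%:R by field; rewrite ?pnatr_eq0.
by rewrite divr_ge0 ?ler0n // subr_ge0.
Qed.


Theorem proposition1 :
  exists (c : algC) (N : nat), 0 < c /\
  forall n : nat,
  exists (rho : 'M[algC]_(2 ^ n))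
         (Lam : LCl n -> 'M[algC]_(2 ^ n) -> 'M[algC]_(2 ^ n))
         (kappa : algC),
    is_state rho /\
    (forall g, is_channel (Lam g)) /\
    (forall eps : algC, 0 <= eps <= 1 -> bias (Obs n) rho Lam eps = kappa * eps) /\
    ((N <= n)%N -> c * sqrtC (sqrtC (2 ^ n)%:R) <= kappa).
Proof.
exists (1 / 2%:R), 1%N; split; first by rewrite divr_gt0 ?ltr01 ?ltr0n.
move=> n; exists (rho0 n), (@Lam n), `|(1 / 2%:R) ^+ n - emb qq ^+ n|.
split; first exact: rho_state.
split; first exact: Lam_channel.
split; first by move=> eps /andP[he _]; rewrite bias_eq.
exact: main_ineq.
Qed.
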